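(* Let $T=T_\lambda(r,m)$ with $r=m$, $n\ge3$, and suppose $T$ acts linearly and inner faithfully on $\Bbbk\overline{Q}$ by $$g\cdot e_i=e_{i+d},\quad g\cdot a_i=\mu_i a_{i+d},\quad g\cdot a_i^*=\mu_i^*a_{i+d}^*,$$ $$x\cdot e_i=\gamma_i(e_i-\lambda^{-1}e_{i+d}),\quad x\cdot a_i=\gamma_{i+1}a_i-\gamma_i\lambda^{-1}(g\cdot a_i),\quad x\cdot a_i^*=\gamma_i a_i^*-\gamma_{i+1}\lambda^{-1}(g\cdot a_i^* ),$$ for some integer $0<d\le n-1$ and scalars $\mu_i,\mu_i^*,\gamma_i\in\Bbbk^\times$, and that this action descends to an inner faithful action on $\Pi_Q$. Let $\tau=\gcd(n,d)$, so that $e_0,\dots,e_{\tau-1}$ form a complete set of representatives of the $g$-orbits on vertices. Then $\{\phi_0(e_i): i=0,\dots,\tau-1\}$ is a $\Bbbk$-basis of the degree-$0$ part $((\Pi_Q)^T)_0$ of the invariant ring; in particular the number of vertices supporting $(\Pi_Q)^T$ equals the number of $g$-orbits of vertices.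
   Context: Let $\Bbbk$ be a field, $r>1$ and $m$ positive integers with $r\mid m$, and $\lambda\in\Bbbk$ a primitive $r$-th root of unity, with $r$ coprime to the characteristic of $\Bbbk$. The generalized Taft algebra $T=T_\lambda(r,m)$ is the Hopf algebra generated by $g,x$ with relations $gx=\lambda xg$, $g^m=1$, $x^r=0$, $\Delta(g)=g\otimes g$, $\Delta(x)=1\otimes x+x\otimes g$, $\varepsilon(g)=1,\varepsilon(x)=0$, $S(g)=g^{-1}$, $S(x)=-xg^{-1}$. An action of $T$ on an algebra $A$ is a $T$-module algebra structure; so $g$ acts by an algebra automorphism and $x\cdot(ab)=a(x\cdot b)+(x\cdot a)(g\cdot b)$. It is inner faithful if no nonzero Hopf ideal $I$ of $T$ satisfies $I\cdot A=0$. Linear means $g$ preserves path length and $x$ maps vertices into the span of vertices and arrows into the span of vertices and arrows. Vertex indices are taken modulo $n$. $\overline{Q}$ has vertices $0,\dots,n-1$ and arrows $a_i:i\to i+1$, $a_i^*:i+1\to i$; in $\Bbbk\overline{Q}$, $e_i$ is the trivial path at $i$ and $pq$ is concatenation ($p$ then $q$) if the target of $p$ is the source of $q$, else $0$. $\Pi_Q=\Bbbk\overline{Q}/(\Omega)$, graded by path length, with $(\Omega)$ generated by $a_i^*a_i-a_{i+1}a_{i+1}^*$; the action descends if $(\Omega)$ is stable under $g$ and $x$. The invariant ring is $(\Pi_Q)^T=\{a\in\Pi_Q:h\cdot a=\varepsilon(h)a\ \forall h\in T\}$. For a path $p$ and integer $\alpha$, $\phi_\alpha(p)=\sum_{i=0}^{r-1}\lambda^{-\alpha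 i}g^i(p)$. *)

(* Defs.v *)
From HB Require Import structures.
From mathcomp Require Import all_boot all_order all_algebra.
Set Implicit Arguments.
Unset Strict Implicit.
Unset Printing Implicit Defensive.
Import GRing.Theory.
Local Open Scope ring_scope.

(* The path algebra k\bar{Q} of the doubled cyclic quiver with n vertices. *)
(* A path is (source vertex, sequence of steps), step true = an arrow   *)
(* a_v : v -> v+1, step false = an arrow a_{v-1}^* : v -> v-1.          *)
(* Each vertex has exactly one outgoing arrow of each kind, so this     *)
(* enumerates all paths; the trivial path e_i is (i, [::]).             *)
(* Elements of k\bar{Q} are finitely supported functions path -> K      *)
(* (coefficients), the product is concatenation extended bilinearly.    *)
Section PathAlgebra.
Variables (n : nat) (K : fieldType).

Definition vert := 'Z_n.
Definition path := (vert * seq bool)%type.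

Definition tgt (p : path) : vert :=
  p.1 + (count id p.2)%:R - (count negb p.2)%:R.

Definition elt := path -> K.

Definition pa_zero : elt := fun _ => 0.
Definition pa_add (f h : elt) : elt := fun p => f p + h p.
Definition pa_scale (c : K) (f : elt) : elt := fun p => c * f p.

(* coefficient of q in f*h = sum over all factorisations q = p p' *)
Definition pa_mul (f h : elt) : elt := fun q =>
  \sum_(k < (size q.2).+1)
     f (q.1, take k q.2) * h (tgt (q.1, take k q.2), drop k q.2).

Definition delta (p : path) : elt := fun q => (q == p)%:R.
Definition ev (i : vert) : elt := delta (i, [::]).
Definition arr (i : vert) : elt := delta (i, [:: true]).
Definition arrs (i : vert) : elt := delta (i + 1, [:: false]).

Definition pa_one : elt := \big[pa_add/pa_zero]_(i : vert) ev i.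

Definition finsupp (f : elt) : Prop :=
  exists s : seq path, forall p, p \notin s -> f p = 0.

Definition deg0 (f : elt) : Prop := forall p : path, p.2 != [::] -> f p = 0.

Definition omega (i : vert) : elt :=
  pa_add (pa_mul (arrs i) (arr i)) (pa_scale (-1) (pa_mul (arr (i + 1)) (arrs (i + 1)))).

Definition inOmega (f : elt) : Prop :=
  exists s : seq (elt * vert * elt),
    foldr (fun t P => (finsupp t.1.1 /\ finsupp t.2) /\ P) True s /\
    f = foldr (fun t acc => pa_add (pa_mul (pa_mul t.1.1 (omega t.1.2)) t.2) acc) pa_zero s.

End PathAlgebra.
Arguments pa_zero {n K}.
Arguments pa_one {n K}.

(* The generalized Taft algebra T_lam(r,m), with its PBW basis         *)
(* g^a x^b (a < m, b < r); an element is its coefficient function.     *)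
Notation idx m r := ('I_m * 'I_r)%type.
Notation Tel K m r := {ffun idx m r -> K}.
Notation TTel K m r := {ffun (idx m r * idx m r) -> K}.

Section Taft.
Variables (K : fieldType) (m r : nat) (lam : K).
Local Notation idx := (idx m r).
Local Notation Tel := (Tel K m r).
Local Notation TTel := (TTel K m r).

(* g^a x^b * g^c x^d = lam^-(b c) g^(a+c mod m) x^(b+d)  (0 if b+d >= r) *)
Definition cT (i j k : idx) : K :=
  if ((k.1 : nat) == (i.1 + j.1) %% m)%N && ((k.2 : nat) == i.2 + j.2)%N
  then lam ^- (i.2 * j.1)%N else 0.

(* scalar multiplication (ffun has no canonical lmod structure) *)
Definition sclT (c : K) (u : Tel) : Tel := [ffun k => c * u k].
Definition sclTT (c : K) (w : TTel) : TTel := [ffun k => c * w k].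

Definition mulT (u v : Tel) : Tel :=
  [ffun k => \sum_(i : idx) \sum_(j : idx) u i * v j * cT i j k].

Definition bT (a b : nat) : Tel :=
  [ffun k : idx => (((k.1 : nat) == a) && ((k.2 : nat) == b))%:R].

Definition oneT : Tel := bT 0 0.
Definition gT : Tel := bT (1 %% m) 0.
Definition xT : Tel := bT 0 1.
Definition gInvT : Tel := bT m.-1 0.
Definition powT (u : Tel) (k : nat) : Tel := iter k (mulT u) oneT.

Definition epsT (u : Tel) : K := \sum_(k : idx) u k * ((k.2 : nat) == 0)%N%:R.

Definition ST (u : Tel) : Tel :=
  \sum_(k : idx) sclT (u k) (mulT (powT (- mulT xT gInvT) k.2) (powT gInvT k.1)).

Definition tens (t s : Tel) : TTel := [ffun k => t k.1 * s k.2].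
Definition mulTT (w z : TTel) : TTel :=
  [ffun k : idx * idx => \sum_(i : idx * idx) \sum_(j : idx * idx)
      w i * z j * (cT i.1 j.1 k.1 * cT i.2 j.2 k.2)].
Definition powTT (w : TTel) (k : nat) : TTel := iter k (mulTT w) (tens oneT oneT).

Definition DeltaT (u : Tel) : TTel :=
  \sum_(k : idx) sclTT (u k) (mulTT (powTT (tens gT gT) k.1)
                             (powTT (tens oneT xT + tens xT gT) k.2)).

Definition HopfIdeal (I : Tel -> Prop) : Prop :=
  I 0 /\
  (forall u v, I u -> I v -> I (u + v)) /\
  (forall c u, I u -> I (sclT c u)) /\
  (forall t u, I u -> I (mulT t u) /\ I (mulT u t)) /\
  (forall u, I u -> epsT u = 0) /\
  (forall u, I u -> I (ST u)) /\
  (forall u, I u -> exists s1 s2 : seq (Tel * Tel),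
      [/\ (forall p, p \in s1 -> I p.1),
          (forall p, p \in s2 -> I p.2) &
          DeltaT u = \sum_(p <- s1) tens p.1 p.2
                     + \sum_(p <- s2) tens p.1 p.2]).

(* inner faithfulness w.r.t. an annihilation predicate ann u <-> u . A = 0 *)
Definition inner_faithful (ann : Tel -> Prop) : Prop :=
  forall I, HopfIdeal I -> (forall u, I u -> ann u) -> forall u, I u -> u = 0.

End Taft.

(* Actions of T on k\bar{Q} given by the actions G, X of g and x.       *)
Section Action.
Variables (n : nat) (K : fieldType) (m r : nat) (lam : K).
Variables (G X : elt n K -> elt n K).

Definition actT (u : Tel K m r) (f : elt n K) : elt n K :=
  \big[@pa_add n K/@pa_zero n K]_(k : idx m r)
     pa_scale (u k) (iter k.1 G (iter k.2 X f)).

Definition is_Taft_module_algebra : Prop :=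
  (forall f, finsupp f -> finsupp (G f) /\ finsupp (X f)) /\
  (forall f h, finsupp f -> finsupp h ->
      G (pa_add f h) = pa_add (G f) (G h) /\ X (pa_add f h) = pa_add (X f) (X h)) /\
  (forall c f, finsupp f ->
      G (pa_scale c f) = pa_scale c (G f) /\ X (pa_scale c f) = pa_scale c (X f)) /\
  (forall f, finsupp f ->
      [/\ iter m G f = f, iter r X f = @pa_zero n K & G (X f) = pa_scale lam (X (G f))]) /\
  (G (@pa_one n K) = @pa_one n K /\ X (@pa_one n K) = @pa_zero n K) /\
  (forall f h, finsupp f -> finsupp h -> G (pa_mul f h) = pa_mul (G f) (G h)) /\
  (forall f h, finsupp f -> finsupp h ->
      X (pa_mul f h) = pa_add (pa_mul f (X h)) (pa_mul (X f) (G h))).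

Definition invPi (f : elt n K) : Prop :=
  forall u : Tel K m r, inOmega (pa_add (actT u f) (pa_scale (- epsT u) f)).

Definition phi (alpha : int) (p : elt n K) : elt n K :=
  \big[@pa_add n K/@pa_zero n K]_(k < r) pa_scale (lam ^ (- (alpha * k%:Z))) (iter k G p).

End Action.

(* Main.v *)
Require Import Defs.
From mathcomp Require Import all_boot all_order all_algebra.
From Stdlib Require Import FunctionalExtensionality.
From mathcomp Require Import ring.
Import GRing.Theory.
Local Open Scope ring_scope.

Lemma bigE (n : nat) (K : fieldType) (I : Type) (s : seq I) (P : pred I)
   (F : I -> elt n K) (p : Defs.path n) :
  (\big[@pa_add n K/pa_zero]_(i <- s | P i) F i) p = \sum_(i <- s | P i) F i p.
Proof. by apply: (big_morph (fun f : elt n K => f p)). Qed.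

Lemma fs_zero n K : finsupp (@pa_zero n K).
Proof. by exists [::]. Qed.

Lemma fs_add n K (f h : elt n K) : finsupp f -> finsupp h -> finsupp (pa_add f h).
Proof.
move=> [s1 H1] [s2 H2]; exists (s1 ++ s2) => p; rewrite mem_cat negb_or => /andP[a b].
by rewrite /pa_add H1 // H2 // addr0.
Qed.

Lemma fs_scale n K c (f : elt n K) : finsupp f -> finsupp (pa_scale c f).
Proof. by move=> [s H]; exists s => p /H; rewrite /pa_scale => ->; rewrite mulr0. Qed.

Lemma fs_delta n K (q : Defs.path n) : finsupp (@delta n K q).
Proof. by exists [:: q] => p; rewrite inE /delta => /negbTE ->. Qed.

Lemma fs_big n K (I : Type) (s : seq I) (F : I -> elt n K) :
  (forall i, finsupp (F i)) -> finsupp (\big[@pa_add n K/pa_zero]_(i <- s) F i).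
Proof.
move=> H; elim: s => [|a s IH]; first by rewrite big_nil; apply: fs_zero.
by rewrite big_cons; apply: fs_add.
Qed.

Lemma lin_big n K (L : elt n K -> elt n K) (I : Type) (s : seq I) (F : I -> elt n K) :
  (forall f h, finsupp f -> finsupp h -> L (pa_add f h) = pa_add (L f) (L h)) ->
  L pa_zero = pa_zero ->
  (forall i, finsupp (F i)) ->
  L (\big[@pa_add n K/pa_zero]_(i <- s) F i) = \big[@pa_add n K/pa_zero]_(i <- s) L (F i).
Proof.
move=> Hadd H0 H; elim: s => [|a s IH]; first by rewrite !big_nil.
by rewrite !big_cons Hadd ?IH //; apply: fs_big.
Qed.

Lemma mul_nil n K (f h : elt n K) v : pa_mul f h (v, [::]) = f (v, [::]) * h (v, [::]).
Proof.
rewrite /pa_mul big_ord_recl big_ord0 addr0 /= /tgt /=.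
by rewrite subr0 addr0.
Qed.

Lemma omega_deg0 n K (f : elt n K) v : inOmega f -> f (v, [::]) = 0.
Proof.
move=> [s [_ ->]]; elim: s => [|t s IH] //=.
rewrite /pa_add IH addr0 !mul_nil /omega /pa_add /pa_scale !mul_nil.
rewrite /arr /arrs /delta !eqE /= !andbF. by rewrite !(mulr0, mul0r, addr0).
Qed.

Lemma omega0 n K : inOmega (@pa_zero n K).
Proof. by exists [::]. Qed.

Lemma sum_pick (T : finType) (K : fieldType) (F : T -> K) (a : T) :
  \sum_(w : T) F w * (w == a)%:R = F a.
Proof.
rewrite (bigD1 a) //= eqxx mulr1 big1 ?addr0 // => w /negbTE ->; by rewrite mulr0.
Qed.

Lemma sum_pick' (T : finType) (K : fieldType) (F : T -> K) (a : T) :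
  \sum_(w : T) F w * (a == w)%:R = F a.
Proof. rewrite -(@sum_pick T K F a); apply: eq_bigr => w _; by rewrite eq_sym. Qed.
Theorem lemma4p2 (K : fieldType) (r n d : nat) (lam : K)
  (mu mus gam : vert n -> K) (G X : elt n K -> elt n K) :
  (1 < r)%N -> r.-primitive_root lam ->
  (forall p : nat, p \in [pchar K] -> ~~ (p %| r)%N) ->
  (3 <= n)%N -> (0 < d)%N -> (d <= n - 1)%N ->
  (forall i, mu i != 0) -> (forall i, mus i != 0) -> (forall i, gam i != 0) ->
  (* T = T_lam(r, m) with m = r acts on k\bar{Q} via G = (g . -), X = (x . -) *)
  is_Taft_module_algebra r r lam G X ->
  (forall i, G (ev K i) = ev K (i + d%:R)) ->
  (forall i, G (arr K i) = pa_scale (mu i) (arr K (i + d%:R))) ->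
  (forall i, G (arrs K i) = pa_scale (mus i) (arrs K (i + d%:R))) ->
  (forall i, X (ev K i) =
     pa_scale (gam i) (pa_add (ev K i) (pa_scale (- lam^-1) (ev K (i + d%:R))))) ->
  (forall i, X (arr K i) =
     pa_add (pa_scale (gam (i + 1)) (arr K i)) (pa_scale (- (gam i * lam^-1)) (G (arr K i)))) ->
  (forall i, X (arrs K i) =
     pa_add (pa_scale (gam i) (arrs K i)) (pa_scale (- (gam (i + 1) * lam^-1)) (G (arrs K i)))) ->
  (* inner faithful on k\bar{Q} *)
  inner_faithful (m := r) (r := r) lam
    (fun u => forall f, finsupp f -> actT G X u f = pa_zero) ->
  (* the action descends to Pi_Q = k\bar{Q}/(Omega) ... *)
  (forall f, inOmega f -> inOmega (G f) /\ inOmega (X f)) ->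
  (* ... and is inner faithful there *)
  inner_faithful (m := r) (r := r) lam
    (fun u => forall f, finsupp f -> inOmega (actT G X u f)) ->
  let tau := gcdn n d in
  (* the classes of phi_0(e_i), i < tau, form a basis of ((Pi_Q)^T)_0 *)
  (forall i : 'I_tau,
     let v := phi r lam G 0 (ev K (i%:R)) in
     [/\ finsupp v, deg0 v & invPi r r G X v]) /\
  (forall c : 'I_tau -> K,
     inOmega (\big[@pa_add n K/pa_zero]_(i < tau) pa_scale (c i) (phi r lam G 0 (ev K (i%:R)))) ->
     forall i, c i = 0) /\
  (forall f, finsupp f -> deg0 f -> invPi r r G X f ->
     exists c : 'I_tau -> K,
       inOmega (pa_add f (pa_scale (-1)
         (\big[@pa_add n K/pa_zero]_(i < tau) pa_scale (c i) (phi r lam G 0 (ev K (i%:R))))))).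
Proof.
move=> r_gt1 prim pch n_ge3 d_gt0 d_le mu0 mus0 gam0 HT HGe HGa HGas HXe HXa HXas
  IF1 desc IF2 tau.
move: HT => [Hfs [Hadd [Hscl [Hrel [[HG1 HX1] [HGm HXm]]]]]].
have n_gt1 : (1 < n)%N by apply: leq_trans n_ge3.
have sc0 : forall h : elt n K, pa_scale 0 h = pa_zero.
  by move=> h; apply: functional_extensionality => p; rewrite /pa_scale mul0r.
have G0 : G pa_zero = pa_zero.
  by rewrite -(sc0 pa_zero) (proj1 (Hscl 0 _ (fs_zero n K))) sc0.
have X0 : X pa_zero = pa_zero.
  by rewrite -(sc0 pa_zero) (proj2 (Hscl 0 _ (fs_zero n K))) sc0.
have GaddL : forall f h, finsupp f -> finsupp h -> G (pa_add f h) = pa_add (G f) (G h).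
  by move=> f h a b; case: (Hadd f h a b).
have XaddL : forall f h, finsupp f -> finsupp h -> X (pa_add f h) = pa_add (X f) (X h).
  by move=> f h a b; case: (Hadd f h a b).
have evE : forall (a : vert n) (w : vert n) l, ev K a (w, l) = ((w == a) && (l == [::]))%:R.
  by move=> a w l; rewrite /ev /delta xpair_eqE.
have decomp : forall f : elt n K, deg0 f ->
    f = \big[@pa_add n K/pa_zero]_(w : vert n) pa_scale (f (w, [::])) (ev K w).
  move=> f f0; apply: functional_extensionality => -[w l]; rewrite bigE.
  under eq_bigr => a _ do rewrite /pa_scale evE.
  case: (altP (l =P [::])) => [->|hl].
    under eq_bigr => a _ do rewrite andbT.
    by rewrite (@sum_pick' _ _ (fun a => f (a, [::]))).
  rewrite f0 // big1 // => a _. by rewrite andbF mulr0.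
have fs_ev : forall a : vert n, finsupp (ev K a) by move=> a; exact: (fs_delta n K (a, [::])).
have deg0_fs : forall f : elt n K, deg0 f -> finsupp f.
  move=> f f0; rewrite (decomp f f0); apply: fs_big => w; exact: fs_scale.
have Gdeg0 : forall f : elt n K, deg0 f -> forall w l,
    G f (w, l) = (l == [::])%:R * f (w - d%:R, [::]).
  move=> f f0 w l; rewrite {1}(decomp f f0) lin_big //; last by move=> a; exact: fs_scale.
  rewrite bigE; under eq_bigr => a _ do rewrite (proj1 (Hscl _ _ (fs_ev a))) HGe /pa_scale evE.
  case: (altP (l =P [::])) => [_|_].
    under eq_bigr => a _ do rewrite andbT -subr_eq eq_sym.
    by rewrite (@sum_pick _ _ (fun a => f (a, [::]))) mul1r.
  rewrite big1 ?mul0r // => a _; by rewrite andbF mulr0.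
have Xdeg0 : forall f : elt n K, deg0 f -> forall w l,
    X f (w, l) = (l == [::])%:R *
      (gam w * f (w, [::]) - lam^-1 * gam (w - d%:R) * f (w - d%:R, [::])).
  move=> f f0 w l; rewrite {1}(decomp f f0) lin_big //; last by move=> a; exact: fs_scale.
  rewrite bigE; under eq_bigr => a _ do rewrite (proj2 (Hscl _ _ (fs_ev a))) HXe /pa_scale /pa_add /pa_scale !evE.
  case: (altP (l =P [::])) => [_|_].
    under eq_bigr => a _ do rewrite !andbT -subr_eq (eq_sym _ a) mulrDr mulrDr.
    rewrite big_split /= mul1r.
    under eq_bigr => a _ do rewrite mulrA.
    rewrite (@sum_pick _ _ (fun a => f (a, [::]) * gam a)).
    under eq_bigr => a _ do rewrite mulrA mulrA.
    rewrite (@sum_pick' _ _ (fun a => f (a, [::]) * gam a * - lam^-1)).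
    by ring.
  rewrite big1 ?mul0r // => a _; by rewrite !andbF !mulr0 addr0 !mulr0.
have one0 : deg0 (@pa_one n K).
  move=> [w l] /= hl; rewrite /pa_one bigE big1 // => a _.
  by rewrite evE (negbTE hl) andbF.
have one1 : forall w, @pa_one n K (w, [::]) = 1.
  move=> w; rewrite /pa_one bigE.
  under eq_bigr => a _ do rewrite evE andbT -[_%:R]mul1r.
  by rewrite (@sum_pick' _ _ (fun _ => 1)).
have hgam : forall w, gam w = lam^-1 * gam (w - d%:R).
  move=> w; have := Xdeg0 _ one0 w [::]; rewrite HX1 /= !one1 mul1r !mulr1.
  by move/eqP; rewrite eq_sym subr_eq0 => /eqP.
have lam0 : lam != 0.
  apply/negP => /eqP l0; have := prim_expr_order prim; rewrite l0 expr0n.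
  have r0 : (r == 0%N) = false by case: (r) r_gt1.
  by rewrite r0 => /esym/eqP; rewrite oner_eq0.
have iterG : forall k (a : vert n), iter k G (ev K a) = ev K (a + (k * d)%:R).
  elim=> [|k IH] a /=; first by rewrite mul0n addr0.
  by rewrite IH HGe mulSn natrD; congr (ev K _); ring.
have ZnE : forall a : nat, val (a%:R : vert n) = (a %% n)%N.
  by move=> a; exact: (val_Zp_nat n_gt1).
have n_gt0 : (0 < n)%N by apply: ltnW.
have ndvd : (n %| r * d)%N.
  have := iterG r 0; rewrite (proj1 (and3_rect (fun a b c => conj a (conj b c)) (Hrel _ (fs_ev 0)))) add0r.
  move=> /(congr1 (fun f : elt n K => f (0, [::]))); rewrite !evE !eqxx /= !andbT.
  case: eqP => [h _|_ /eqP]; last by rewrite oner_eq0.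
  by rewrite /dvdn -ZnE -h.
have tau_gt0 : (0 < tau)%N by rewrite gcdn_gt0 n_gt0.
have taun : (tau %| n)%N by apply: dvdn_gcdl.
have taud : (tau %| d)%N by apply: dvdn_gcdr.
have divlem : forall x, (n %| x * d)%N -> (n %/ tau %| x)%N.
  move=> x hx; have : (n %| gcdn (x * d) (x * n))%N by rewrite dvdn_gcd hx dvdn_mull.
  by rewrite -muln_gcdr gcdnC -/tau -{1}(divnK taun) dvdn_pmul2r.
have gamit : forall k w, lam ^+ k * gam (w + (k * d)%:R) = gam w.
  elim=> [|k IH] w; first by rewrite mul0n addr0 expr0 mul1r.
  have -> : w + (k.+1 * d)%:R = (w + (k * d)%:R) + d%:R by rewrite mulSn natrD; ring.
  by rewrite hgam addrK exprS -mulrA mulrCA (mulVKf lam0) IH.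
have nr : (n %/ tau)%N = r.
  apply/eqP; rewrite eqn_dvd divlem // /= (prim_order_dvd prim).
  have := gamit (n %/ tau)%N 0.
  have -> : ((n %/ tau * d)%N%:R : vert n) = 0.
    by rewrite mulnC /tau -muln_divCA_gcd natrM (pchar_Zp n_gt1) mul0r.
  rewrite addr0 => /eqP; rewrite -subr_eq0 -{2}[gam 0]mul1r -mulrBl mulf_eq0 (negbTE (gam0 0)) orbF.
  by rewrite subr_eq0.
have kinj : forall k k' : nat, (k < r)%N -> (k' < r)%N ->
    (k * d = k' * d %[mod n])%N -> k = k'.
  move=> k k'; wlog le : k k' / (k' <= k)%N.
    move=> H hk hk' e; case: (leqP k' k) => [l|l]; first exact: H.
    by apply/esym; apply: H => //; apply: ltnW.
  move=> hk hk' /eqP; rewrite eqn_mod_dvd ?leq_mul2r ?le ?orbT // -mulnBl => /divlem.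
  rewrite nr /dvdn modn_small; last by apply: leq_ltn_trans (leq_subr _ _) hk.
  by rewrite subn_eq0 => le2; apply/eqP; rewrite eqn_leq le2 le.
pose F := fun ik : 'I_tau * 'I_r => ((ik.1 + ik.2 * d)%N%:R : vert n).
have modF : forall ik, (val (F ik) %% tau)%N = ik.1.
  move=> [i k]; rewrite /F ZnE /= (modn_dvdm _ taun) -(divnK taud) mulnA addnC modnMDl.
  by rewrite modn_small.
have injF : injective F.
  move=> [i k] [i' k'] h.
  have hi : i = i' by apply: val_inj; have := modF (i, k); rewrite h modF /= => ->.
  subst i'; congr pair; apply: val_inj; apply: (kinj _ _ (ltn_ord k) (ltn_ord k')).
  apply/eqP; rewrite -(eqn_modDl i) -!ZnE.
  by move: h; rewrite /F /= => ->.
have surjF : forall w : vert n, exists ik, w = F ik.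
  move=> w; apply/codomP; apply: (inj_card_onto injF).
  rewrite card_prod !card_ord -nr (Zp_cast n_gt1) mulnC divnK //.
have chiE : forall (i : 'I_tau) (w : vert n),
    \sum_(k < r) ((w == F (i, k))%:R : K) = (((val w %% tau)%N == i)%:R).
  move=> i w; case: (surjF w) => -[a1 a2] ->; rewrite modF /=.
  under eq_bigr => k _ do rewrite (inj_eq injF) xpair_eqE /=.
  have -> : ((a1 : nat) == i) = (a1 == i) by [].
  case: (a1 == i) => /=; last by rewrite big1.
  under eq_bigr => k _ do rewrite -[_%:R]mul1r.
  by rewrite (@sum_pick' _ _ (fun _ => 1)).
have fconst : forall f : elt n K, (forall w, f (w - d%:R, [::]) = f (w, [::])) ->
    forall w, f (w, [::]) = f (((val w %% tau)%N)%:R, [::]).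
  move=> f hf w; case: (surjF w) => -[i k] ->; rewrite modF /= /F /=.
  elim: (nat_of_ord k) => [|k' IH]; first by rewrite mul0n addn0.
  rewrite -IH -hf; congr (f (_, _)); rewrite mulSn !natrD; ring.
have phiE : forall (i : 'I_tau) w l, phi r lam G 0 (ev K i%:R) (w, l) =
    ((l == [::]) && ((val w %% tau)%N == i))%:R.
  move=> i w l; rewrite /phi bigE.
  under eq_bigr => k _ do rewrite /pa_scale mul0r oppr0 expr0z mul1r iterG -natrD evE.
  case: (altP (l =P [::])) => [_|_] /=; last by rewrite big1 // => k _; rewrite andbF.
  rewrite -chiE; apply: eq_bigr => k _; by rewrite andbT.
have modsh : forall w : vert n, modn (val (w - d%:R)) tau = modn (val w) tau.
  move=> w.
  have -> : w - d%:R = ((val w + (n - d))%N)%:R.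
    rewrite natrD natrB; last by apply: leq_trans d_le (leq_subr _ _).
    by rewrite (pchar_Zp n_gt1) natr_Zp; ring.
  rewrite ZnE (modn_dvdm _ taun) -modnDmr.
  have /eqP -> : ((n - d) %% tau == 0)%N by rewrite -/(dvdn _ _) dvdn_sub.
  by rewrite addn0.
have ordE : forall (i j : 'I_tau), ((i : nat) == j) = (i == j) by [].
split.
  move=> i /=; set v := phi r lam G 0 (ev K i%:R).
  have vdeg0 : deg0 v by move=> [w l] /= hl; rewrite /v phiE (negbTE hl).
  have Gv : G v = v.
    apply: functional_extensionality => -[w l].
    rewrite Gdeg0 // /v !phiE modsh eqxx /=.
    by case: (l == [::]) => /=; rewrite ?mul1r ?mul0r.
  have Xv : X v = pa_zero.
    apply: functional_extensionality => -[w l].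
    rewrite Xdeg0 // /v !phiE modsh eqxx /= (hgam w) subrr mulr0 //.
  have iX : forall b, iter b X v = if b == 0%N then v else pa_zero.
    elim=> [|b IH] //=; rewrite IH; case: b {IH} => [|b] /=; [exact: Xv | exact: X0].
  have iXG : forall a b, iter a G (iter b X v) = if b == 0%N then v else pa_zero.
    move=> a b; rewrite iX; elim: a => [|a IH] //=; rewrite IH.
    by case: (b == 0%N); [exact: Gv | exact: G0].
  split => //; first exact: deg0_fs.
  move=> u.
  have -> : pa_add (actT G X u v) (pa_scale (- epsT u) v) = pa_zero.
    apply: functional_extensionality => p.
    rewrite /pa_add /actT bigE /pa_scale /epsT.
    under eq_bigr => k _ do rewrite /pa_scale iXG.
    rewrite /pa_zero mulNr mulr_suml -sumrN -big_split big1 // => k _.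
    by case: eqP => _ /=; rewrite /pa_zero; ring.
  exact: omega0.
split.
  move=> c hc i; have := omega_deg0 _ _ _ ((i : nat)%:R : vert n) hc.
  rewrite bigE; under eq_bigr => j _ do rewrite /pa_scale phiE eqxx /=.
  have ilt : (i < n)%N by apply: leq_trans (ltn_ord i) (dvdn_leq n_gt0 taun).
  rewrite ZnE (modn_small ilt) (modn_small (ltn_ord i)).
  under eq_bigr => j _ do rewrite ordE.
  by rewrite (@sum_pick' _ _ c).
move=> f ffs f0 finv.
exists (fun i : 'I_tau => f ((i : nat)%:R, [::])).
pose k0 : 'I_r * 'I_r := (Ordinal r_gt1, Ordinal (ltnW r_gt1)).
have bTE : forall k, bT K r r 1 0 k = (k == k0)%:R.
  by move=> [a b]; rewrite ffunE /= xpair_eqE.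
have hf : forall w, f (w - d%:R, [::]) = f (w, [::]).
  move=> w; have := omega_deg0 _ _ _ w (finv (bT K r r 1 0)).
  rewrite /pa_add /actT bigE /pa_scale /epsT.
  under eq_bigr => k _ do rewrite /pa_scale bTE mulrC.
  under [X in _ + - X * _ = _]eq_bigr => k _ do rewrite bTE mulrC.
  rewrite (@sum_pick _ _ (fun k : 'I_r * 'I_r => iter k.1 G (iter k.2 X f) (w, [::])) k0).
  rewrite (@sum_pick _ _ (fun k : 'I_r * 'I_r => ((k.2 : nat) == 0%N)%:R) k0) /= Gdeg0 // mul1r.
  by move/eqP; rewrite mulN1r subr_eq0 => /eqP.
have -> : pa_add f (pa_scale (-1) (\big[@pa_add n K/pa_zero]_(i < tau)
      pa_scale (f ((i : nat)%:R, [::])) (phi r lam G 0 (ev K i%:R)))) = pa_zero.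
  apply: functional_extensionality => -[w l].
  rewrite /pa_add /pa_scale bigE; under eq_bigr => i _ do rewrite /pa_scale phiE.
  case: (altP (l =P [::])) => [le|ln] /=.
    subst l.
    pose a : 'I_tau := Ordinal (ltn_pmod (val w) tau_gt0).
    under eq_bigr => i _ do rewrite (_ : ((val w %% tau)%N == i) = (a == i)) //.
    rewrite (@sum_pick' _ _ (fun i : 'I_tau => f ((i : nat)%:R, [::])) a) /=.
    by rewrite -fconst // mulN1r subrr.
  rewrite f0 // big1 ?mulr0 ?addr0 // => i _; by rewrite mulr0.
exact: omega0.
Qed.
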